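(* In the two-period setting of the context: (i) if $\frac{\hat\ell_n^P}{E_n}+\frac12\ge\frac{\hat\ell^P}{E}$ for all $n$, then for every $\alpha\in[0,1]$ the aggregate peak load at a Nash equilibrium of $\mathcal G^{\mathrm{DP}}_\alpha$ is $\ell^P=\frac E2+\alpha\frac{\hat\ell^P-\hat\ell^O}{2}$; (ii) if $2(N-1)\hat\ell_n^P\ge(\hat\ell^P-\hat\ell^O)-E_n$ for all $n$, then for every $\alpha\in[0,1]$ the aggregate peak load at the Nash equilibrium of $\mathcal G^{\mathrm{HP}}_\alpha$ is $\ell^P=\frac E2+\phi(\alpha)\frac{\hat\ell^P-\hat\ell^O}{2}$, where $\phi(\alpha)=\frac{2\alpha}{(1+\alpha)+(1-\alpha)N}$.
   Context: Two-period setting: users $\mathcal N=\{1,\dots,N\}$, periods $\mathcal H=\{P,O\}$. Each user $n$ has energy demand $E_n>0$ and preferred profile $(\hat\ell_n^P,\hat\ell_n^O)$ with $\hat\ell_n^h\ge0$, $\hat\ell_n^P+\hat\ell_n^O=E_n$; $E=\sum_nE_n$, $\hat\ell^h=\sum_n\hat\ell_n^h$, and $\hat\ell^P\ge\frac E2\ge\hat\ell^O$. Feasible set $\mathcal L_n=\{(\ell_n^P,\ell_n^O):\ell_n^P+\ell_n^O=E_n,\ \ell_n^P,\ell_n^O\ge0\}$; $\ell^h=\sum_n\ell_n^h$. Costs $C_h(x)=x^2$, utilities $u_n(\boldsymbol\ell_n)=-\sum_h(\ell_n^h-\hat\ell_n^h)^2$. DP bill $b_n^{\mathrm{DP}}=\frac{E_n}{E}((\ell^P)^2+(\ell^O)^2)$;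 HP bill $b_n^{\mathrm{HP}}=\sum_h\ell_n^h\ell^h$. In $\mathcal G^{\mathrm{DP}}_\alpha$ (resp. $\mathcal G^{\mathrm{HP}}_\alpha$) user $n$ minimizes $f_n^\alpha=(1-\alpha)b_n-\alpha u_n(\boldsymbol\ell_n)$ over $\mathcal L_n$ with the corresponding bill; Nash equilibria are defined as usual. *)

(* Defs.v *)
(* Two-period (P = peak, O = off-peak) energy game. *)
From mathcomp Require Import all_boot all_order all_algebra.
Set Implicit Arguments. Unset Strict Implicit. Unset Printing Implicit Defensive.
Import Order.TTheory GRing.Theory Num.Theory.
Local Open Scope ring_scope.

Section Game.
Variables (R : realFieldType) (N : nat).

Definition agg (f : 'I_N -> R) : R := \sum_(n < N) f n.

Definition upd (f : 'I_N -> R) (n : 'I_N) (x : R) : 'I_N -> R :=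
  fun m => if m == n then x else f m.

Definition feasible_n (E : 'I_N -> R) (n : 'I_N) (x y : R) : Prop :=
  x + y = E n /\ 0 <= x /\ 0 <= y.

Definition util (lhP lhO : 'I_N -> R) (n : 'I_N) (x y : R) : R :=
  - ((x - lhP n) ^+ 2 + (y - lhO n) ^+ 2).

(* DP bill: (E_n / E) * (C_P(l^P) + C_O(l^O)) with C_h(x) = x^2 *)
Definition bill_DP (E lP lO : 'I_N -> R) (n : 'I_N) : R :=
  E n / agg E * ((agg lP) ^+ 2 + (agg lO) ^+ 2).

Definition bill_HP (E lP lO : 'I_N -> R) (n : 'I_N) : R :=
  lP n * agg lP + lO n * agg lO.

Definition cost (bill : ('I_N -> R) -> ('I_N -> R) -> ('I_N -> R) -> 'I_N -> R)
  (alpha : R) (E lhP lhO lP lO : 'I_N -> R) (n : 'I_N) : R :=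
  (1 - alpha) * bill E lP lO n - alpha * util lhP lhO n (lP n) (lO n).

Definition is_NE (bill : ('I_N -> R) -> ('I_N -> R) -> ('I_N -> R) -> 'I_N -> R)
  (alpha : R) (E lhP lhO lP lO : 'I_N -> R) : Prop :=
  (forall n, feasible_n E n (lP n) (lO n)) /\
  forall (n : 'I_N) (x y : R), feasible_n E n x y ->
    cost bill alpha E lhP lhO lP lO n <=
    cost bill alpha E lhP lhO (upd lP n x) (upd lO n y) n.

Definition phi (alpha : R) : R :=
  2 * alpha / ((1 + alpha) + (1 - alpha) * N%:R).

End Game.

(* Main.v *)
Require Import Defs.
From mathcomp Require Import all_boot all_order all_algebra.
From mathcomp Require Import ring lra.
Import Order.TTheory GRing.Theory Num.Theory.
Local Open Scope ring_scope.

Section Aux.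
Variables (R : realFieldType) (N : nat).

Lemma agg_upd (f : 'I_N -> R) n x : agg (upd f n x) = agg f - f n + x.
Proof.
rewrite /agg (bigD1 n) //= [in RHS](bigD1 n) //= /upd eqxx.
have -> : \sum_(i < N | i != n) (if i == n then x else f i) = \sum_(i < N | i != n) f i.
  by apply: eq_bigr => i /negbTE ->.
ring.
Qed.

Lemma upd_at (f : 'I_N -> R) n x : upd f n x n = x.
Proof. by rewrite /upd eqxx. Qed.

Lemma kkt (g q h : R) : 0 < h ->
  (forall s, 0 < s -> s <= h -> 0 <= g * s + q * s ^+ 2) -> 0 <= g.
Proof.
move=> h0 H; rewrite leNgt; apply/negP => g0.
have c0 : 0 < `|q| + 1 by have := normr_ge0 q; lra.
set s := Num.min h (- g / (`|q| + 1)).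
have s0 : 0 < s by rewrite lt_min h0 divr_gt0 // oppr_gt0.
have sh : s <= h by rewrite ge_min lexx.
have sq : s <= - g / (`|q| + 1) by rewrite ge_min lexx orbT.
rewrite ler_pdivlMr // in sq.
have := H s s0 sh; have := ler_norm q; nra.
Qed.

Lemma kkt2 (c : R -> R) (C0 g q a b : R) : 0 <= a -> 0 <= b ->
  (forall t, - a <= t -> t <= b -> C0 <= c t) ->
  (forall t, c t - C0 = g * t + q * t ^+ 2) ->
  (0 < b -> 0 <= g) /\ (0 < a -> g <= 0).
Proof.
move=> a0 b0 H E; split => h0.
  apply: (@kkt g q b h0) => s s0 sh; rewrite -E; have := H s; lra.
suff : 0 <= - g by lra.
apply: (@kkt (- g) q a h0) => s s0 sh.
have := H (- s); have := E (- s); rewrite sqrrN; lra.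
Qed.


Lemma NE_DP alpha (E p o lP lO : 'I_N -> R) n :
  is_NE (@bill_DP R N) alpha E p o lP lO ->
  (0 < lO n -> 0 <= (1-alpha)*(E n / agg E)*(2*(agg lP - agg lO)) + alpha*(2*((lP n - p n) - (lO n - o n))))
  /\ (0 < lP n -> (1-alpha)*(E n / agg E)*(2*(agg lP - agg lO)) + alpha*(2*((lP n - p n) - (lO n - o n))) <= 0).
Proof.
case=> feas H; have [s [x0 y0]] := feas n.
apply: (@kkt2 (fun t => cost (@bill_DP R N) alpha E p o (upd lP n (lP n + t)) (upd lO n (lO n - t)) n)
  (cost (@bill_DP R N) alpha E p o lP lO n) _ ((1-alpha)*(E n/agg E)*2 + 2*alpha) _ _ x0 y0).
- move=> t h1 h2; apply: H; rewrite /feasible_n; split; [lra|split; lra].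
- move=> t; rewrite /cost /bill_DP /util !agg_upd !upd_at; ring.
Qed.

Lemma NE_HP alpha (E p o lP lO : 'I_N -> R) n :
  is_NE (@bill_HP R N) alpha E p o lP lO ->
  (0 < lO n -> 0 <= (1-alpha)*(agg lP + lP n - agg lO - lO n) + alpha*(2*((lP n - p n) - (lO n - o n))))
  /\ (0 < lP n -> (1-alpha)*(agg lP + lP n - agg lO - lO n) + alpha*(2*((lP n - p n) - (lO n - o n))) <= 0).
Proof.
case=> feas H; have [s [x0 y0]] := feas n.
apply: (@kkt2 (fun t => cost (@bill_HP R N) alpha E p o (upd lP n (lP n + t)) (upd lO n (lO n - t)) n)
  (cost (@bill_HP R N) alpha E p o lP lO n) _ 2 _ _ x0 y0).
- move=> t h1 h2; apply: H; rewrite /feasible_n; split; [lra|split; lra].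
- move=> t; rewrite /cost /bill_HP /util !agg_upd !upd_at; ring.
Qed.

End Aux.


Section Main.
Variables (R : realFieldType) (N : nat).

Lemma agg_pos (E : 'I_N -> R) : (0 < N)%N -> (forall n, 0 < E n) -> 0 < agg E.
Proof.
move=> N0 H; rewrite /agg (bigD1 (Ordinal N0)) //=.
have := H (Ordinal N0); have : 0 <= \sum_(i < N | i != Ordinal N0) E i.
  by apply: sumr_ge0 => i _; apply: ltW.
lra.
Qed.

Lemma agg_add (f g h : 'I_N -> R) : (forall n, f n + g n = h n) -> agg f + agg g = agg h.
Proof. move=> H; rewrite /agg -big_split /=; apply: eq_bigr => i _; exact: H. Qed.

Lemma agg_le (f g : 'I_N -> R) c : (forall n, c * f n <= g n) -> c * agg f <= agg g.
Proof. by move=> H; rewrite /agg mulr_sumr; apply: ler_sum => i _. Qed.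


Lemma agg_lin (f g : 'I_N -> R) a b c :
  agg (fun n => a * f n + b * g n - c) = a * agg f + b * agg g - N%:R * c.
Proof.
rewrite /agg sumrB big_split /= -!mulr_sumr sumr_const card_ord.
by rewrite mulr_natl.
Qed.

Lemma DP_main (E p o : 'I_N -> R) : (0 < N)%N -> (forall n, 0 < E n) ->
  (forall n, 0 <= p n /\ 0 <= o n /\ p n + o n = E n) ->
  agg E / 2 <= agg p ->
  (forall n, agg p / agg E <= p n / E n + 1 / 2) ->
  forall alpha : R, 0 <= alpha <= 1 ->
  forall lP lO : 'I_N -> R, is_NE (@bill_DP R N) alpha E p o lP lO ->
  agg lP = agg E / 2 + alpha * ((agg p - agg o) / 2).
Proof.
move=> N0 Epos Hhat HP Hc alpha /andP[a0 a1] lP lO ne.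
have S0 := agg_pos E N0 Epos.
set S := agg E in S0 HP Hc *.
have hO : agg p + agg o = S by apply: agg_add => n; case: (Hhat n) => _ [].
have [feas _] := ne.
have hL : agg lP + agg lO = S by apply: agg_add => n; case: (feas n).
set P := agg p in HP Hc hO *.
set A := agg lP in hL *.
set Dstar := alpha * (2 * P - S).
set k := (1 - alpha) * Dstar / 2.
set Astar := S / 2 + alpha * (2 * P - S) / 2.
have hAstar : alpha * Astar = alpha * P - k by rewrite /Astar /k /Dstar; field.
suff : A = Astar by rewrite /Astar => ->; rewrite -hO; field.
have Dst0 : 0 <= Dstar by rewrite /Dstar; apply: mulr_ge0 => //; lra.
have k0 : 0 <= k by rewrite /k; apply: divr_ge0 => //; apply: mulr_ge0 => //; lra.
pose r n := E n / S.
have r0 n : 0 < r n by rewrite /r divr_gt0.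
have rE n : r n * S = E n by rewrite /r; field; rewrite gt_eqF.
pose w n := alpha * p n - r n * k.
have sw : agg w = alpha * P - k.
  rewrite /agg /w sumrB -mulr_sumr -mulr_suml.
  have -> : \sum_(i < N) r i = 1.
    by rewrite /r -mulr_suml divff // gt_eqF.
  by rewrite mul1r.
have w0 n : 0 <= w n.
  have hr := r0 n.
  have h1 : P / S * E n <= (p n / E n + 1 / 2) * E n by apply: ler_wpM2r; [apply: ltW|].
  have e1 : P / S * E n = r n * P by rewrite /r; field; rewrite gt_eqF.
  have e2 : (p n / E n + 1 / 2) * E n = p n + r n * S / 2.
    by rewrite -(rE n); field; rewrite !gt_eqF // mulr_gt0.
  rewrite e1 e2 in h1.
  have h3 : 0 <= alpha * (p n - r n * (2 * P - S) / 2) by apply: mulr_ge0 => //; lra.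
  have h4 : 0 <= alpha * alpha * r n * (2 * P - S) by apply: mulr_ge0; [apply: mulr_ge0; [apply: mulr_ge0|apply: ltW]|lra].
  rewrite /w /k /Dstar; nra.
have wE n : w n <= alpha * E n.
  have [pn [on hn]] := Hhat n.
  have := r0 n; rewrite /w; nra.
have hB : agg lO = S - A by lra.
have gfact n : (0 < lO n -> 0 <= (1 - alpha) * r n * (2 * (2 * A - S)) + alpha * (4 * (lP n - p n)))
            /\ (0 < lP n -> (1 - alpha) * r n * (2 * (2 * A - S)) + alpha * (4 * (lP n - p n)) <= 0).
  have [fn [x0 y0]] := feas n; have [pn [on hn]] := Hhat n.
  have e : (1 - alpha) * (E n / S) * (2 * (A - agg lO)) + alpha * (2 * (lP n - p n - (lO n - o n)))
         = (1 - alpha) * r n * (2 * (2 * A - S)) + alpha * (4 * (lP n - p n)).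
    rewrite hB /r.
    have -> : lO n = E n - lP n by lra.
    have -> : o n = E n - p n by lra.
    ring.
  by rewrite -e; apply: NE_DP.
have [az|apos] : alpha = 0 \/ 0 < alpha.
  by move: a0; rewrite le0r => /orP[/eqP|]; [left|right].
-
  rewrite /Astar az.
  have up : A <= S / 2.
    rewrite leNgt; apply/negP => hA.
    have : 1 * A <= agg (fun _ : 'I_N => 0 : R).
      apply: agg_le => n; rewrite mul1r leNgt; apply/negP => h.
      have := (gfact n).2 h; rewrite az.
      have := mulr_gt0 (r0 n) (_ : 0 < 2 * A - S); nra.
    rewrite /agg big1_eq; lra.
  have lo : S / 2 <= A.
    rewrite leNgt; apply/negP => hA.
    have : 1 * S <= A.
      apply: agg_le => n; rewrite mul1r leNgt; apply/negP => h.
      have [fn [x0 y0]] := feas n.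
      have h' : 0 < lO n by lra.
      have := (gfact n).1 h'; rewrite az.
      have := mulr_gt0 (r0 n) (_ : 0 < S - 2 * A); nra.
    lra.
  lra.
have up : A <= Astar.
  rewrite leNgt; apply/negP => hA.
  have hD : Dstar <= 2 * A - S by move: hA; rewrite /Astar /Dstar; lra.
  have hs : alpha * A <= agg w.
    apply: agg_le => n.
    have [fn [x0 y0]] := feas n.
    case: (lerP (lP n) 0) => h.
      have := w0 n; rewrite /w /=; nra.
    have := (gfact n).2 h.
    have : 0 <= (1 - alpha) * r n * (2 * A - S - Dstar).
      apply: mulr_ge0; [apply: mulr_ge0; [lra|apply: ltW (r0 n)]|lra].
    rewrite /w /k /=; nra.
  move: hs; rewrite sw -hAstar; nra.
have lo : Astar <= A.
  rewrite leNgt; apply/negP => hA.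
  have hD : 2 * A - S <= Dstar by move: hA; rewrite /Astar /Dstar; lra.
  have hs : agg w <= alpha * A.
    rewrite /A /agg mulr_sumr; apply: ler_sum => n _.
    have [fn [x0 y0]] := feas n.
    case: (lerP (lO n) 0) => h.
      have := wE n; rewrite /w /=; nra.
    have := (gfact n).1 h.
    have : 0 <= (1 - alpha) * r n * (Dstar - (2 * A - S)).
      apply: mulr_ge0; [apply: mulr_ge0; [lra|apply: ltW (r0 n)]|lra].
    rewrite /w /k /=; nra.
  move: hs; rewrite sw -hAstar; nra.
lra.
Qed.


Lemma HP_main (E p o : 'I_N -> R) : (0 < N)%N -> (forall n, 0 < E n) ->
  (forall n, 0 <= p n /\ 0 <= o n /\ p n + o n = E n) ->
  agg E / 2 <= agg p ->
  (forall n, (agg p - agg o) - E n <= 2 * (N%:R - 1) * p n) ->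
  forall alpha : R, 0 <= alpha <= 1 ->
  forall lP lO : 'I_N -> R, is_NE (@bill_HP R N) alpha E p o lP lO ->
  agg lP = agg E / 2 + phi N alpha * ((agg p - agg o) / 2).
Proof.
move=> N0 Epos Hhat HP Hc alpha /andP[a0 a1] lP lO ne.
have S0 := agg_pos E N0 Epos.
set S := agg E in S0 HP Hc *.
have hO : agg p + agg o = S by apply: agg_add => n; case: (Hhat n) => _ [].
have [feas _] := ne.
have hL : agg lP + agg lO = S by apply: agg_add => n; case: (feas n).
set P := agg p in HP Hc hO *.
set A := agg lP in hL *.
have hB : agg lO = S - A by lra.
have hOe : agg o = S - P by lra.
rewrite hOe in Hc *.
have N1 : 1 <= N%:R :> R by rewrite ler1n.
set K := (1 + alpha) + (1 - alpha) * N%:R.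
have K0 : 0 < K.
  have : 0 <= (1 - alpha) * N%:R by apply: mulr_ge0; lra.
  rewrite /K; lra.
rewrite /phi -/K.
set Dstar := 2 * alpha / K * (2 * P - S).
set Astar := S / 2 + 2 * alpha / K * ((P - (S - P)) / 2).
suff : A = Astar by [].
have Dst0 : 0 <= Dstar.
  by rewrite /Dstar; apply: mulr_ge0; [apply: divr_ge0; [lra|apply: ltW]|lra].
pose c := (1 - alpha) * Dstar.
pose z n := 4 * alpha * p n + (1 - alpha) * E n - c.
have sz : agg z = (2 + 2 * alpha) * Astar.
  rewrite /z agg_lin -/P -/S.
  by rewrite /c /Dstar /Astar /K; field; rewrite -/K gt_eqF.
have z0 n : 0 <= z n.
  have [pn [on hn]] := Hhat n.
  set t := (1 - alpha) * (2 * alpha) / K.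
  have t0 : 0 <= t by apply: divr_ge0; [apply: mulr_ge0; lra|apply: ltW].
  have e : 4 * alpha * p n + (1 - alpha) * E n - t * (2 * (N%:R - 1) * p n + E n)
     = (8 * alpha * p n + (1 - alpha) ^+ 2 * (1 + N%:R) * E n) / K.
    by rewrite /t /K; field; rewrite -/K gt_eqF.
  have e0 : 0 <= (8 * alpha * p n + (1 - alpha) ^+ 2 * (1 + N%:R) * E n) / K.
    apply: divr_ge0; last by apply: ltW.
    have : 0 <= (1 - alpha) ^+ 2 * (1 + N%:R) * E n.
      by apply: mulr_ge0; [apply: mulr_ge0; [apply: sqr_ge0|lra]|apply: ltW].
    nra.
  have hc : c = t * (2 * P - S) by rewrite /c /t /Dstar; field; rewrite gt_eqF.
  have := ler_wpM2l t0 (Hc n).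
  rewrite /z hc; lra.
have zE n : z n <= (2 + 2 * alpha) * E n.
  have [pn [on hn]] := Hhat n.
  have : 0 <= c by rewrite /c; apply: mulr_ge0 => //; lra.
  rewrite /z; nra.
have gfact n : (0 < lO n -> 0 <= (1 - alpha) * (2 * A - S + 2 * lP n - E n) + alpha * (4 * (lP n - p n)))
            /\ (0 < lP n -> (1 - alpha) * (2 * A - S + 2 * lP n - E n) + alpha * (4 * (lP n - p n)) <= 0).
  have [fn [x0 y0]] := feas n; have [pn [on hn]] := Hhat n.
  have e : (1 - alpha) * (A + lP n - agg lO - lO n) + alpha * (2 * (lP n - p n - (lO n - o n)))
         = (1 - alpha) * (2 * A - S + 2 * lP n - E n) + alpha * (4 * (lP n - p n)).
    rewrite hB.
    have -> : lO n = E n - lP n by lra.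
    have -> : o n = E n - p n by lra.
    ring.
  by have := @NE_HP R N alpha E p o lP lO n ne; rewrite -/A e.
have up : A <= Astar.
  rewrite leNgt; apply/negP => hA.
  have hD : Dstar <= 2 * A - S by move: hA; rewrite /Astar /Dstar; lra.
  have hs : (2 + 2 * alpha) * A <= agg z.
    apply: agg_le => n.
    have [fn [x0 y0]] := feas n.
    case: (lerP (lP n) 0) => h.
      have := z0 n; nra.
    have := (gfact n).2 h.
    have : 0 <= (1 - alpha) * (2 * A - S - Dstar) by apply: mulr_ge0; lra.
    rewrite /z /c /=; nra.
  move: hs; rewrite sz; nra.
have lo : Astar <= A.
  rewrite leNgt; apply/negP => hA.
  have hD : 2 * A - S <= Dstar by move: hA; rewrite /Astar /Dstar; lra.
  have hs : agg z <= (2 + 2 * alpha) * A.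
    rewrite /A /agg mulr_sumr; apply: ler_sum => n _.
    have [fn [x0 y0]] := feas n.
    case: (lerP (lO n) 0) => h.
      have := zE n; nra.
    have := (gfact n).1 h.
    have : 0 <= (1 - alpha) * (Dstar - (2 * A - S)) by apply: mulr_ge0; lra.
    rewrite /z /c /=; nra.
  move: hs; rewrite sz; nra.
lra.
Qed.

End Main.

Theorem corollary3 (R : realFieldType) (N : nat) (E lhP lhO : 'I_N -> R) :
  (0 < N)%N ->
  (forall n, 0 < E n) ->
  (forall n, 0 <= lhP n /\ 0 <= lhO n /\ lhP n + lhO n = E n) ->
  agg lhP >= agg E / 2 -> agg E / 2 >= agg lhO ->
  ((forall n, lhP n / E n + 1 / 2 >= agg lhP / agg E) ->
     forall alpha : R, 0 <= alpha <= 1 ->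
     forall lP lO : 'I_N -> R, is_NE (@bill_DP R N) alpha E lhP lhO lP lO ->
       agg lP = agg E / 2 + alpha * ((agg lhP - agg lhO) / 2))
  /\
  ((forall n, 2 * (N%:R - 1) * lhP n >= (agg lhP - agg lhO) - E n) ->
     forall alpha : R, 0 <= alpha <= 1 ->
     forall lP lO : 'I_N -> R, is_NE (@bill_HP R N) alpha E lhP lhO lP lO ->
       agg lP = agg E / 2 + phi N alpha * ((agg lhP - agg lhO) / 2)).
Proof.
move=> N0 Epos Hhat HP HO; split.
- exact: DP_main.
- exact: HP_main.
Qed.
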